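(* Let $(\Re, S, V)$ be a $V$-complete vector $S$-metric space, where $V$ is Archimedean. Let $K:\Re\to\Re$ be a map such that $K^2=K\circ K$ is continuous, and let $f:\Re\to\Re$ be a map commuting with $K$ (i.e. $fK=Kf$). Suppose: (i) $fK(\Re)\subseteq K^2(\Re)$; (ii) there is a constant $q\in[0,\tfrac13)$ such that for all $x,y\in\Re$, \[ S(fx,fx,fy)\preceq q\,U(x,x,y) \] for some \[ U(x,x,y)\in\Big\{S(Kx,Kx,Ky),\ S(Kx,Kx,fx),\ S(Ky,Ky,fy),\ \tfrac13\big[S(Kx,Kx,fy)+S(Ky,Ky,fx)\big]\Big\}; \] (iii) $K(\Re)$ or $f(\Re)$ is $V$-complete as a subspace of $\Re$. Then $K$ and $f$ have a unique common fixed point.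
   Context: A vector lattice (Riesz space) $V$ is a real vector space with a partial order $\preceq$ compatible with the linear structure ($p_1 \preceq p_2 \Rightarrow p_1+p_3 \preceq p_2+p_3$ and $\omega p_1 \preceq \omega p_2$ for real $\omega>0$) in which every two-element set has a supremum and an infimum. $V$ is Archimedean if $\inf\{\tfrac{1}{m}v : m \in \mathbb{N}\} = 0$ for every $v \in V^+=\{v\in V: v\succeq 0\}$. For a sequence $(\mu_n)$ in $V$, $\mu_n \downarrow 0$ means $(\mu_n)$ is decreasing with $\inf_n \mu_n = 0$. A vector $S$-metric on a nonempty set $\Re$ is a map $S:\Re\times\Re\times\Re\to V$ such that for all $x,y,z,a\in\Re$: (a) $S(x,y,z)\succeq 0$; (b) $S(x,y,z)=0$ iff $x=y=z$; (c) $S(x,y,z)\preceq S(x,y,a)+S(y,y,a)+S(z,z,a)$. The triple $(\Re,S,V)$ is a vector $S$-metric space. A sequence $(x_n)$ in $\Re$ $V$-converges to $x\in\Re$ (written $x_n \xrightarrow{S,V} x$) if there is a sequence $(\mu_n)$ in $V$ with $\mu_n\downarrow 0$ and $S(x_n,x_n,x)\preceq \mu_n$ for all $n$. It is $V$-Cauchy if there is $(\mu_n)$ in $V$ with $\mu_n\downarrow 0$ and $S(x_n,x_n,x_{n+q})\preceq\mu_n$ for all $n$ and all $q$. The space (or a subset of it) is $V$-complete if every $V$-Cauchy sequence in it $V$-converges to a limit in it. A map $T:\Re\to\Re$ is continuous if $x_n\xrightarrow{S,V}x$ implies $Tx_n\xrightarrow{S,V}Tx$. *)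

(* Defs.v *)
From Stdlib Require Import Reals.
Open Scope R_scope.

Record vector_lattice := VectorLattice {
  vl_car :> Type;
  vl_zero : vl_car;
  vl_add : vl_car -> vl_car -> vl_car;
  vl_opp : vl_car -> vl_car;
  vl_scal : R -> vl_car -> vl_car;
  vl_le : vl_car -> vl_car -> Prop;
  vl_addA : forall a b c, vl_add a (vl_add b c) = vl_add (vl_add a b) c;
  vl_addC : forall a b, vl_add a b = vl_add b a;
  vl_add0 : forall a, vl_add vl_zero a = a;
  vl_addN : forall a, vl_add (vl_opp a) a = vl_zero;
  vl_scalA : forall (r s : R) a, vl_scal r (vl_scal s a) = vl_scal (r * s) a;
  vl_scal1 : forall a, vl_scal 1 a = a;
  vl_scalDv : forall r a b, vl_scal r (vl_add a b) = vl_add (vl_scal r a) (vl_scal r b);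
  vl_scalDr : forall r s a, vl_scal (r + s) a = vl_add (vl_scal r a) (vl_scal s a);
  vl_le_refl : forall a, vl_le a a;
  vl_le_anti : forall a b, vl_le a b -> vl_le b a -> a = b;
  vl_le_trans : forall a b c, vl_le a b -> vl_le b c -> vl_le a c;
  vl_le_add : forall a b c, vl_le a b -> vl_le (vl_add a c) (vl_add b c);
  vl_le_scal : forall (w : R) a b, 0 < w -> vl_le a b -> vl_le (vl_scal w a) (vl_scal w b);
  vl_sup2 : forall a b, exists s, vl_le a s /\ vl_le b s /\
              (forall u, vl_le a u -> vl_le b u -> vl_le s u);
  vl_inf2 : forall a b, exists i, vl_le i a /\ vl_le i b /\
              (forall u, vl_le u a -> vl_le u b -> vl_le u i)
}.

Arguments vl_zero {v}.
Arguments vl_add {v}.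
Arguments vl_opp {v}.
Arguments vl_scal {v}.
Arguments vl_le {v}.

Section VL.
Variable V : vector_lattice.

Definition is_infimum (P : V -> Prop) (i : V) : Prop :=
  (forall v, P v -> vl_le i v) /\
  (forall u, (forall v, P v -> vl_le u v) -> vl_le u i).

Definition archimedean : Prop :=
  forall v : V, vl_le vl_zero v ->
    is_infimum (fun w => exists m : nat, (1 <= m)%nat /\ w = vl_scal (/ INR m) v) vl_zero.

Definition decr_to_zero (mu : nat -> V) : Prop :=
  (forall n, vl_le (mu (S n)) (mu n)) /\ is_infimum (fun w => exists n, w = mu n) vl_zero.

Variable X : Type.

Definition is_vector_S_metric (Sm : X -> X -> X -> V) : Prop :=
  (forall x y z, vl_le vl_zero (Sm x y z)) /\
  (forall x y z, Sm x y z = vl_zero <-> (x = y /\ y = z)) /\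
  (forall x y z a, vl_le (Sm x y z)
      (vl_add (Sm x y a) (vl_add (Sm y y a) (Sm z z a)))).

Variable Sm : X -> X -> X -> V.

Definition V_converges (x : nat -> X) (l : X) : Prop :=
  exists mu : nat -> V, decr_to_zero mu /\ forall n, vl_le (Sm (x n) (x n) l) (mu n).

Definition V_Cauchy (x : nat -> X) : Prop :=
  exists mu : nat -> V, decr_to_zero mu /\
    forall n q, vl_le (Sm (x n) (x n) (x (n + q)%nat)) (mu n).

Definition V_complete_subset (A : X -> Prop) : Prop :=
  forall x : nat -> X, (forall n, A (x n)) -> V_Cauchy x ->
    exists l, A l /\ V_converges x l.

Definition V_complete : Prop := V_complete_subset (fun _ => True).

Definition S_continuous (T : X -> X) : Prop :=
  forall (x : nat -> X) (l : X), V_converges x l -> V_converges (fun n => T (x n)) (T l).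

End VL.

Arguments is_infimum {V}.
Arguments decr_to_zero {V}.
Arguments is_vector_S_metric {V X}.
Arguments V_converges {V X}.
Arguments V_Cauchy {V X}.
Arguments V_complete_subset {V X}.
Arguments V_complete {V X}.
Arguments S_continuous {V X}.

(* Main.v *)
Require Import Defs.
From Stdlib Require Import Reals Lra Lia ClassicalEpsilon.
Open Scope R_scope.

Local Notation "a ⊕ b" := (vl_add a b) (at level 50, left associativity).
Local Notation "r ⊙ a" := (vl_scal r a) (at level 40).
Local Notation "a ≼ b" := (vl_le a b) (at level 70).
Local Notation "0v" := vl_zero.

Section Alg.
Variable V : vector_lattice.
Implicit Types a b c d : V.

Lemma addr0 a : a ⊕ 0v = a.
Proof. rewrite vl_addC. apply vl_add0. Qed.

Lemma addrN a : a ⊕ vl_opp a = 0v.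
Proof. rewrite vl_addC. apply vl_addN. Qed.

Lemma le_add_l a b c : a ≼ b -> c ⊕ a ≼ c ⊕ b.
Proof. intros H. rewrite (vl_addC _ c a), (vl_addC _ c b). now apply vl_le_add. Qed.

Lemma le_add2 a b c d : a ≼ b -> c ≼ d -> a ⊕ c ≼ b ⊕ d.
Proof.
  intros H1 H2. apply vl_le_trans with (b ⊕ c). now apply vl_le_add. now apply le_add_l.
Qed.

Lemma scal0v a : 0 ⊙ a = 0v.
Proof.
  assert (h : 0 ⊙ a ⊕ 0 ⊙ a = 0 ⊙ a) by (rewrite <- vl_scalDr, Rplus_0_l; reflexivity).
  transitivity (0 ⊙ a ⊕ (0 ⊙ a ⊕ vl_opp (0 ⊙ a))).
  now rewrite addrN, addr0. now rewrite vl_addA, h, addrN.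
Qed.

Lemma scalv0 r : r ⊙ (0v : V) = 0v.
Proof.
  transitivity (r ⊙ (0 ⊙ (0v : V))). now rewrite scal0v.
  rewrite vl_scalA, Rmult_0_r. apply scal0v.
Qed.

Lemma scal_le r a b : 0 <= r -> a ≼ b -> r ⊙ a ≼ r ⊙ b.
Proof.
  intros Hr H. destruct (Rle_lt_or_eq_dec _ _ Hr) as [Hr'|Hr'].
  now apply vl_le_scal. rewrite <- Hr', !scal0v. apply vl_le_refl.
Qed.

Lemma scal_nonneg r a : 0 <= r -> 0v ≼ a -> 0v ≼ r ⊙ a.
Proof. intros Hr H. rewrite <- (scalv0 r). now apply scal_le. Qed.

Lemma add_nonneg_l a b c : 0v ≼ c -> a ≼ b -> a ≼ c ⊕ b.
Proof. intros H1 H2. rewrite <- (vl_add0 _ a). now apply le_add2. Qed.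

Lemma add_nonneg_r a b c : 0v ≼ c -> a ≼ b -> a ≼ b ⊕ c.
Proof. intros H1 H2. rewrite vl_addC. now apply add_nonneg_l. Qed.

Lemma scal_mono r s a : r <= s -> 0v ≼ a -> r ⊙ a ≼ s ⊙ a.
Proof.
  intros Hrs H. replace s with (r + (s - r)) by ring. rewrite vl_scalDr.
  apply add_nonneg_r. apply scal_nonneg. lra. exact H. apply vl_le_refl.
Qed.

Lemma scale_inv r a b : 0 < r -> r ⊙ a ≼ b -> a ≼ (/ r) ⊙ b.
Proof.
  intros Hr H. apply (vl_le_scal _ (/ r)) in H; [|now apply Rinv_0_lt_compat].
  rewrite vl_scalA, Rinv_l, vl_scal1 in H by lra. exact H.
Qed.

Lemma absorb s r a b : 0 <= s < 1 -> a ≼ (r ⊙ b) ⊕ (s ⊙ a) -> a ≼ (r / (1 - s)) ⊙ b.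
Proof.
  intros Hs H. apply (vl_le_add _ _ _ ((- s) ⊙ a)) in H.
  rewrite <- vl_addA, <- vl_scalDr, Rplus_opp_r, scal0v, addr0 in H.
  rewrite <- (vl_scal1 _ a) in H at 1. rewrite <- vl_scalDr in H.
  apply scale_inv in H; [|lra]. rewrite vl_scalA in H.
  replace (r / (1 - s)) with (/ (1 + - s) * r) by (field; lra). exact H.
Qed.

Lemma self_absorb s a : 0 <= s < 1 -> a ≼ s ⊙ a -> a ≼ 0v.
Proof.
  intros Hs H. assert (H' : a ≼ (0 ⊙ a) ⊕ (s ⊙ a)) by (rewrite scal0v, vl_add0; exact H).
  apply absorb in H'; [|exact Hs]. replace (0 / (1 - s)) with 0 in H' by (field; lra).
  now rewrite scal0v in H'.
Qed.

Lemma scal_sum r s a : r ⊙ a ⊕ s ⊙ a = (r + s) ⊙ a.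
Proof. now rewrite vl_scalDr. Qed.

Lemma add_perm a b c : a ⊕ b ⊕ c = a ⊕ c ⊕ b.
Proof. rewrite <- !vl_addA. now rewrite (vl_addC _ b c). Qed.

Lemma inf_lb (mu : nat -> V) n : decr_to_zero mu -> 0v ≼ mu n.
Proof. intros [_ [H _]]. apply H. now exists n. Qed.

Lemma inf_glb (mu : nat -> V) a : decr_to_zero mu -> (forall n, a ≼ mu n) -> a ≼ 0v.
Proof. intros [_ [_ H]] Ha. apply H. intros v [n ->]. apply Ha. Qed.

Lemma decr_mono (mu : nat -> V) m n : decr_to_zero mu -> (m <= n)%nat -> mu n ≼ mu m.
Proof.
  intros Hmu Hmn. induction Hmn. apply vl_le_refl.
  apply vl_le_trans with (mu m0); [apply Hmu | exact IHHmn].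
Qed.

Lemma inf_glb_scal (mu : nat -> V) r a : decr_to_zero mu -> 0 < r -> (forall n, a ≼ r ⊙ mu n) -> a ≼ 0v.
Proof.
  intros Hmu Hr H. assert (h : (/ r) ⊙ a ≼ 0v).
  { apply (inf_glb mu). exact Hmu. intros n. rewrite <- (vl_scal1 _ (mu n)).
    replace 1 with (/ r * r) by (field; lra). rewrite <- vl_scalA.
    apply scal_le. left; now apply Rinv_0_lt_compat. apply H. }
  apply (vl_le_scal _ r) in h; [|exact Hr]. rewrite vl_scalA, Rinv_r, vl_scal1, scalv0 in h by lra.
  exact h.
Qed.

Lemma geometric q C d : archimedean V -> 0 <= q < 1 -> 0v ≼ d -> 0 <= C ->
  decr_to_zero (fun n => (C * q ^ n) ⊙ d).
Proof.
  intros Harch Hq Hd HC. split; [|split].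
  - intros n. apply scal_mono; [|exact Hd]. simpl.
    assert (0 <= q ^ n) by (apply pow_le; lra). apply Rmult_le_compat_l; [exact HC|]. nra.
  - intros v [n ->]. apply scal_nonneg; [|exact Hd]. apply Rmult_le_pos. exact HC. apply pow_le; lra.
  - intros u Hu. destruct (Harch d Hd) as [_ Hg]. apply Hg.
    intros v [m [Hm ->]].
    assert (Hm' : 1 <= INR m) by (apply (le_INR 1); exact Hm).
    destruct (pow_lt_1_zero q ltac:(rewrite Rabs_pos_eq; lra) (/ (INR m * (C + 1))))
      as [N HN].
    { apply Rinv_0_lt_compat. nra. }
    specialize (HN N (le_n N)). rewrite Rabs_pos_eq in HN by (apply pow_le; lra).
    apply vl_le_trans with ((C * q ^ N) ⊙ d). apply Hu. now exists N.
    apply scal_mono; [|exact Hd].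
    assert (h1 : C * q ^ N <= C * / (INR m * (C + 1))) by nra.
    apply Rle_trans with (1 := h1).
    rewrite Rinv_mult. 
    assert (0 < / INR m) by (apply Rinv_0_lt_compat; lra).
    assert (C * / (C + 1) <= 1).
    { apply Rmult_le_reg_r with (C + 1). lra. rewrite Rmult_assoc, Rinv_l by lra. lra. }
    nra.
Qed.

End Alg.

Lemma double (V : vector_lattice) (v : V) : v ⊕ v = 2 ⊙ v.
Proof. replace 2 with (1+1) by ring. now rewrite vl_scalDr, vl_scal1. Qed.

Section SM.
Variables (V : vector_lattice) (X : Type) (Sm : X -> X -> X -> V).
Hypothesis HS : is_vector_S_metric Sm.

Lemma S_self x : Sm x x x = 0v.
Proof. destruct HS as [_ [H _]]. apply H. auto. Qed.

Lemma S_nonneg x y z : 0v ≼ Sm x y z.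
Proof. destruct HS as [H _]. apply H. Qed.

Lemma S_sym_le x y : Sm x x y ≼ Sm y y x.
Proof.
  destruct HS as [_ [_ H]]. eapply vl_le_trans. apply (H x x y x).
  rewrite !S_self, !vl_add0. apply vl_le_refl.
Qed.

Lemma S_sym x y : Sm x x y = Sm y y x.
Proof. apply vl_le_anti; apply S_sym_le. Qed.

Lemma S_tri x y z : Sm x x z ≼ 2 ⊙ Sm x x y ⊕ Sm y y z.
Proof.
  destruct HS as [_ [_ H]]. eapply vl_le_trans. apply (H x x z y).
  rewrite vl_addA, double, (S_sym z y). apply vl_le_refl.
Qed.

Lemma S_zero x y : Sm x x y ≼ 0v -> x = y.
Proof.
  intros H. destruct HS as [_ [H2 _]]. assert (h : Sm x x y = 0v).
  { apply vl_le_anti. exact H. apply S_nonneg. }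
  apply H2 in h. destruct h; assumption.
Qed.

Variables (K f : X -> X) (q : R).
Hypothesis Hq : 0 <= q < 1/3.
Hypothesis Hc : forall x y,
      vl_le (Sm (f x) (f x) (f y)) (vl_scal q (Sm (K x) (K x) (K y))) \/
      vl_le (Sm (f x) (f x) (f y)) (vl_scal q (Sm (K x) (K x) (f x))) \/
      vl_le (Sm (f x) (f x) (f y)) (vl_scal q (Sm (K y) (K y) (f y))) \/
      vl_le (Sm (f x) (f x) (f y))
        (vl_scal q (vl_scal (1/3) (vl_add (Sm (K x) (K x) (f y)) (Sm (K y) (K y) (f x))))).

Lemma coincide P Q : K P = f P -> K Q = f Q -> f P = f Q.
Proof.
  intros HP HQ. apply S_zero.
  destruct (Hc P Q) as [H|[H|[H|H]]]; rewrite ?HP, ?HQ in H.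
  - eapply self_absorb; [|exact H]; lra.
  - rewrite S_self, scalv0 in H. exact H.
  - rewrite S_self, scalv0 in H. exact H.
  - rewrite (S_sym (f Q) (f P)), double, !vl_scalA in H.
    eapply self_absorb; [|exact H]; lra.
Qed.

End SM.

Theorem theorem2p4 (V : vector_lattice) (X : Type) (Sm : X -> X -> X -> V)
  (K f : X -> X) :
  inhabited X ->
  is_vector_S_metric Sm ->
  V_complete Sm ->
  archimedean V ->
  S_continuous Sm (fun x => K (K x)) ->
  (forall x, f (K x) = K (f x)) ->
  (* (i) fK(X) ⊆ K^2(X) *)
  (forall x, exists y, f (K x) = K (K y)) ->
  (* (ii) *)
  (exists q : R, 0 <= q < 1/3 /\
    forall x y,
      vl_le (Sm (f x) (f x) (f y)) (vl_scal q (Sm (K x) (K x) (K y))) \/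
      vl_le (Sm (f x) (f x) (f y)) (vl_scal q (Sm (K x) (K x) (f x))) \/
      vl_le (Sm (f x) (f x) (f y)) (vl_scal q (Sm (K y) (K y) (f y))) \/
      vl_le (Sm (f x) (f x) (f y))
        (vl_scal q (vl_scal (1/3) (vl_add (Sm (K x) (K x) (f y)) (Sm (K y) (K y) (f x)))))) ->
  (* (iii) *)
  (V_complete_subset Sm (fun z => exists x, z = K x) \/
   V_complete_subset Sm (fun z => exists x, z = f x)) ->
  exists z, K z = z /\ f z = z /\ (forall w, K w = w -> f w = w -> w = z).
Proof.
  intros [x0] HS Hcomp Harch Hcont Hcomm Hsub [q [Hq Hc]] _.
  set (g := fun x => proj1_sig (constructive_indefinite_description _ (Hsub x))).
  assert (Hg : forall x, f (K x) = K (K (g x))).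
  { intros x. unfold g. destruct (constructive_indefinite_description _ (Hsub x)). exact e. }
  set (xs := fun n => Nat.iter n g x0).
  set (u := fun n => K (xs n)).
  set (z := fun n => f (u n)).
  assert (HKu : forall n, K (u (S n)) = z n).
  { intros n. unfold z, u. rewrite Hg. reflexivity. }
  assert (Hcomm2 : forall y, f (K (K y)) = K (K (f y))).
  { intros y. rewrite Hcomm, Hcomm. reflexivity. }
  set (d := fun n => Sm (z n) (z n) (z (S n))).
  assert (Hd0 : 0v ≼ d 0%nat) by apply (S_nonneg _ _ _ HS).
  assert (Hstep : forall n, d (S n) ≼ q ⊙ d n).
  { intros n. assert (Hdn : 0v ≼ d n) by apply (S_nonneg _ _ _ HS).
    destruct (Hc (u (S n)) (u (S (S n)))) as [H|[H|[H|H]]];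
      rewrite !HKu in H; fold (z (S n)) (z (S (S n))) in H.
    - exact H.
    - exact H.
    - apply vl_le_trans with 0v. apply (self_absorb _ q). lra. exact H.
      apply scal_nonneg. lra. exact Hdn.
    - rewrite S_self, addr0, vl_scalA in H by exact HS.
      assert (H2 : d (S n) ≼ (q*(1/3)) ⊙ (2 ⊙ d n ⊕ d (S n))).
      { eapply vl_le_trans. exact H. apply scal_le. lra.
        apply (S_tri _ _ _ HS (z n) (z (S n)) (z (S (S n)))). }
      clear H. rename H2 into H.
      rewrite vl_scalDv, vl_scalA in H.
      apply absorb in H; [|lra].
      eapply vl_le_trans; [exact H|].
      apply scal_mono; [|exact Hdn].
      apply Rmult_le_reg_r with (1 - q * (1/3)). lra.
      unfold Rdiv. rewrite Rmult_assoc, Rinv_l by lra. nra. }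
  assert (Hdn : forall n, d n ≼ (q ^ n) ⊙ d 0%nat).
  { induction n. simpl. rewrite vl_scal1. apply vl_le_refl.
    eapply vl_le_trans. apply Hstep. eapply vl_le_trans. apply scal_le. lra. exact IHn.
    rewrite vl_scalA. apply vl_le_refl. }
  assert (Hcauchy : forall m n, Sm (z n) (z n) (z (n + m)%nat) ≼
                      (2 / (1 - q) * (q ^ n - q ^ n * q ^ m)) ⊙ d 0%nat).
  { induction m; intros n.
    - rewrite Nat.add_0_r, S_self by exact HS. simpl.
      replace (2 / (1 - q) * (q ^ n - q ^ n * 1)) with 0 by (field; lra).
      rewrite scal0v. apply vl_le_refl.
    - eapply vl_le_trans. apply (S_tri _ _ _ HS _ (z (S n))).
      replace (n + S m)%nat with (S n + m)%nat by lia.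
      eapply vl_le_trans. apply le_add2. apply scal_le. lra. apply Hdn. apply IHm.
      rewrite vl_scalA, scal_sum. apply scal_mono; [|exact Hd0].
      right. simpl. field. lra. }
  assert (Hgeo := geometric V q (2 / (1 - q)) (d 0%nat) Harch ltac:(lra) Hd0
                    ltac:(apply Rmult_le_pos; [lra| left; apply Rinv_0_lt_compat; lra])).
  assert (HC : V_Cauchy Sm z).
  { exists (fun n => (2 / (1 - q) * q ^ n) ⊙ d 0%nat). split. exact Hgeo.
    intros n m. eapply vl_le_trans. apply Hcauchy. apply scal_mono; [|exact Hd0].
    assert (0 <= q ^ n) by (apply pow_le; lra). assert (0 <= q ^ m) by (apply pow_le; lra).
    assert (0 <= 2 / (1 - q)) by (apply Rmult_le_pos; [lra| left; apply Rinv_0_lt_compat; lra]).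
    apply Rmult_le_compat_l. lra. nra. }
  destruct (Hcomp z (fun _ => I) HC) as [l [_ Hl]].
  destruct (Hcont _ _ Hl) as [mu [Hmu He]]. simpl in He.
  set (w := fun n => K (K (z n))).
  set (t := K (K l)). set (b := K l).
  set (D := Sm t t (f b)).
  assert (HD0 : 0v ≼ D) by apply (S_nonneg _ _ _ HS).
  assert (Hmun : forall n, 0v ≼ mu n) by (intros; apply (inf_lb _ mu); exact Hmu).
  assert (Hmu1 : forall n, mu (S n) ≼ mu n) by apply Hmu.
  assert (HU : forall n, Sm (w (S n)) (w (S n)) (f b) ≼ q ⊙ ((2 ⊙ mu n ⊕ mu n) ⊕ D)).
  { intros n. set (p := K (K (u (S n)))).
    assert (HKp : K p = w n) by (unfold p, w; rewrite HKu; reflexivity).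
    assert (Hfp : f p = w (S n)) by (unfold p, w; rewrite Hcomm2; reflexivity).
    destruct (Hc p b) as [H|[H|[H|H]]]; rewrite ?HKp, ?Hfp in H; change (K b) with t in H;
      eapply vl_le_trans; try exact H; apply scal_le; try lra.
    - apply add_nonneg_r. exact HD0. apply add_nonneg_l.
      apply scal_nonneg. lra. apply Hmun. apply He.
    - apply add_nonneg_r. exact HD0.
      eapply vl_le_trans. apply (S_tri _ _ _ HS _ t).
      apply le_add2. apply scal_le. lra. apply He.
      rewrite (S_sym _ _ _ HS). eapply vl_le_trans. apply He. apply Hmu1.
    - apply add_nonneg_l. apply add_nonneg_l. apply scal_nonneg. lra. apply Hmun. apply Hmun.
      apply vl_le_refl.
    - eapply vl_le_trans. apply scal_mono with (s := 1). lra.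
      apply add_nonneg_l; apply (S_nonneg _ _ _ HS).
      rewrite vl_scal1. rewrite add_perm. apply le_add2.
      eapply vl_le_trans. apply (S_tri _ _ _ HS _ t). apply le_add2.
      apply scal_le. lra. apply He. apply vl_le_refl.
      rewrite (S_sym _ _ _ HS). eapply vl_le_trans. apply He. apply Hmu1. }
  assert (HA : forall n, 2 ⊙ mu n ⊕ mu n = 3 ⊙ mu n).
  { intros n. replace 3 with (2 + 1) by ring. now rewrite <- scal_sum, vl_scal1. }
  assert (HD : D ≼ 0v).
  { apply (inf_glb_scal _ mu ((2 + q*3)/(1-q))). exact Hmu. apply Rdiv_lt_0_compat; lra.
    intros n. apply (absorb _ q (2 + q*3)). lra.
    eapply vl_le_trans. apply (S_tri _ _ _ HS _ (w (S n))).
    rewrite (S_sym _ _ _ HS t (w (S n))).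
    eapply vl_le_trans. apply le_add2. apply scal_le. lra.
    eapply vl_le_trans. apply He. apply Hmu1. apply HU.
    rewrite HA, vl_scalDv, vl_scalA, vl_addA, scal_sum. apply vl_le_refl. }
  assert (Hfb : K b = f b).
  { change (t = f b). apply (S_zero _ _ _ HS). exact HD. }
  set (c := K b).
  assert (Hfc : K c = f c).
  { unfold c. rewrite Hcomm, <- Hfb. reflexivity. }
  pose proof (coincide V X Sm HS K f q Hq Hc) as Hcoin.
  assert (E : f c = c).
  { rewrite (Hcoin c b Hfc Hfb). rewrite <- Hfb. reflexivity. }
  exists c. split. congruence. split. exact E.
  intros w' Hk Hf. transitivity (f w'). symmetry; exact Hf.
  transitivity (f c). apply Hcoin. congruence. exact Hfc. exact E.
Qed.
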